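(* There exists $N$ such that for all integers $n\geq N$, $$t(n,2)\geq n\log_2 n-4n\log_2\log_2 n-2n.$$
   Context: All graphs are finite, simple and undirected. In an edge-colored graph (adjacent edges may receive the same color), a path is a rainbow path if no two of its edges have the same color. A graph $G$ is $d$-rainbow connected if there is an edge-coloring of $G$ using $d$ colors such that every two distinct vertices of $G$ are joined by a rainbow path. For positive integers $n$ and $d$, $t(n,d)$ denotes the minimum number of edges of a $d$-rainbow connected graph on $n$ vertices. *)

(* Defs.v *)
From mathcomp Require Import all_boot.
From Stdlib Require Import ClassicalEpsilon Reals.
Set Implicit Arguments. Unset Strict Implicit. Unset Printing Implicit Defensive.

Definition simple_graph n (E : {set {set 'I_n}}) : Prop :=
  forall e, e \in E -> #|e| = 2.

(* The colouring is given on all subsets; only its values on edges matter. *)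
Definition rainbow_path n d (E : {set {set 'I_n}}) (c : {set 'I_n} -> 'I_d)
    (u v : 'I_n) (p : seq 'I_n) : Prop :=
  [/\ last u p = v, uniq (u :: p),
      path (fun x y => [set x; y] \in E) u p &
      uniq [seq c [set xy.1; xy.2] | xy <- zip (u :: p) p]].

Definition rainbow_connected n d (E : {set {set 'I_n}}) : Prop :=
  exists c : {set 'I_n} -> 'I_d,
    forall u v : 'I_n, u != v -> exists p, rainbow_path E c u v p.

Definition asb (P : Prop) : bool :=
  if excluded_middle_informative P then true else false.

(* The default value 'C(n,2) (number of edges of K_n, which is
   d-rainbow connected for d >= 1) does not exceed the true minimum. *)
Definition t (n d : nat) : nat :=
  \big[minn/'C(n, 2)]_(E : {set {set 'I_n}} |
       asb (simple_graph E /\ rainbow_connected d E)) #|E|.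

Definition log2 (x : R) : R := (ln x / ln 2)%R.

(* Main.v *)
Require Import Defs.
From Stdlib Require Import Reals.
From mathcomp Require Import all_boot.
Set Implicit Arguments. Unset Strict Implicit. Unset Printing Implicit Defensive.

Lemma edge_neq n (E : {set {set 'I_n}}) (u x : 'I_n) :
  simple_graph E -> [set u; x] \in E -> u != x.
Proof.
move=> hE hux; apply/eqP=> eux; subst x.
by move: (hE _ hux); rewrite setUid cards1.
Qed.

Lemma rainbow_short n (E : {set {set 'I_n}}) (c : {set 'I_n} -> 'I_2)
  (u w : 'I_n) p :
  rainbow_path E c u w p -> u != w ->
  (p = [:: w] /\ [set u; w] \in E) \/ exists y, [/\ p = [:: y; w], [set u; y] \in E,
                          [set y; w] \in E & c [set u; y] != c [set y; w]].
Proof.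
case=> hl hu hp hcol huw.
have hs : size p <= 2.
  have := max_card (mem [seq c [set xy.1; xy.2] | xy <- zip (u :: p) p]).
  rewrite card_ord (card_uniqP hcol) size_map size_zip /=.
  by rewrite (minn_idPr (leqnSn _)).
case: p hl hu hp hcol hs => [|a [|b [|d p']]] /= hl hu hp hcol hs //.
- by rewrite hl eqxx in huw.
- by left; rewrite hl; move: hp; rewrite hl andbT.
- right; exists a; move: hp hcol; rewrite hl /= !andbT.
  by case/andP=> h1 h2; rewrite inE => hcol; split.
Qed.

Definition Nb n (E : {set {set 'I_n}}) (u : 'I_n) : {set 'I_n} :=
  [set x | [set u; x] \in E].
Definition Lo n (E : {set {set 'I_n}}) (D : nat) : {set 'I_n} :=
  [set u | #|Nb E u| < D].
Definition Nh n (E : {set {set 'I_n}}) D (u : 'I_n) : {set 'I_n} :=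
  Nb E u :&: ~: Lo E D.
Definition Sg n (E : {set {set 'I_n}}) (c : {set 'I_n} -> 'I_2) D
  (s : {ffun 'I_n -> 'I_2}) : {set 'I_n} :=
  [set u in Lo E D | [forall x in Nh E D u, s x == c [set u; x]]].

Lemma Sg_close n (E : {set {set 'I_n}}) (c : {set 'I_n} -> 'I_2) D s u w :
  (forall u v : 'I_n, u != v -> exists p, rainbow_path E c u v p) ->
  u \in Sg E c D s -> w \in Sg E c D s -> u != w ->
  w \in Nb E u \/ exists2 y, y \in Nb E u :&: Lo E D & w \in Nb E y.
Proof.
move=> hc hu hw huw.
have [p hp] := hc u w huw.
case: (rainbow_short hp huw) => [[_ e]|[y [_ e1 e2 hne]]].
  by left; rewrite inE.
have yu : y \in Nb E u by rewrite inE.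
have yw : w \in Nb E y by rewrite inE.
case yL : (y \in Lo E D).
  by right; exists y => //; rewrite in_setI yu yL.
exfalso.
move: hu hw; rewrite /Sg !in_set => /andP[_ /forall_inP hu] /andP[_ /forall_inP hw].
have h1 := hu y; have h2 := hw y.
rewrite /Nh !in_setI !in_setC yL /= /Nb !in_set !andbT in h1 h2.
have e2' : [set w; y] \in E by rewrite setUC.
move: (h1 e1) (h2 e2') => /eqP -> /eqP hh.
by rewrite hh setUC eqxx in hne.
Qed.

Lemma sum_mem_card (T : finType) (A : {set T}) :
  \sum_x (x \in A : nat) = #|A|.
Proof.
by rewrite -sum1_card [RHS]big_mkcond; apply: eq_bigr => x _; case: (x \in A).
Qed.

Lemma Sg_card n (E : {set {set 'I_n}}) (c : {set 'I_n} -> 'I_2) D s :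
  (forall u v : 'I_n, u != v -> exists p, rainbow_path E c u v p) ->
  #|Sg E c D s| <= 1 + D + D * D.
Proof.
move=> hc.
case: (set_0Vmem (Sg E c D s)) => [->|[u hu]]; first by rewrite cards0.
set A := Nb E u :&: Lo E D.
have huL : u \in Lo E D by move: hu; rewrite /Sg in_set => /andP[].
have hNu : #|Nb E u| < D by move: huL; rewrite /Lo in_set.
rewrite -sum1_card.
apply: (@leq_trans (\sum_w ((w == u) + (w \in Nb E u) + \sum_(y in A) (w \in Nb E y)))).
  rewrite big_mkcond; apply: leq_sum => w _.
  case hw: (w \in Sg E c D s) => //.
  case: (eqVneq u w) => [->|huw]; first by rewrite -addnA addn_gt0.
  case: (Sg_close hc hu hw huw) => [->|[y hy hwy]]; first by rewrite !addn_gt0 /= ?orbT.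
  by rewrite (bigD1 y) //= hwy !addn_gt0 /= ?orbT.
rewrite !big_split /= sum_mem_card.

rewrite (bigD1 u) //= eqxx big1 => [|w /negbTE -> //].
rewrite addn0 exchange_big /=.
rewrite -addnA leq_add2l.
apply: leq_add; first exact: ltnW.
apply: (@leq_trans (\sum_(y in A) D)).
  apply: leq_sum => y; rewrite /A in_setI => /andP[_].
  by rewrite sum_mem_card /Lo in_set => /ltnW.
rewrite sum_nat_const leq_mul2r; apply/orP; right.
apply: (@leq_trans #|Nb E u|); last exact: ltnW.
by apply: subset_leq_card; apply: subsetIl.
Qed.

Lemma count_fix n (A : {set 'I_n}) (g : 'I_n -> 'I_2) :
  #|[set s : {ffun 'I_n -> 'I_2} | [forall x in A, s x == g x]]| = 2 ^ (n - #|A|).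
Proof.
pose F := fun x : 'I_n => if x \in A then pred1 (g x) else predT.
have -> : #|[set s : {ffun 'I_n -> 'I_2} | [forall x in A, s x == g x]]|
          = #|family F|.
  apply: eq_card => s; rewrite in_set.
  apply/forall_inP/familyP => h x.
    rewrite /F; case: ifP => hx //=; exact: h.
  by move=> hx; have := h x; rewrite /F hx.
rewrite card_family foldrE big_map big_enum /=.
rewrite (bigID (mem A)) /=.
rewrite (eq_bigr (fun _ => 1)); last by move=> x hx; rewrite /F hx card1.
rewrite [X in _ * X](eq_bigr (fun _ => 2)); last first.
  move=> x hx; rewrite /F (negbTE hx).
  by rewrite -[RHS](card_ord 2); apply: eq_card.
rewrite [X in _ * X](eq_bigl (fun i => i \in ~: A)); last by move=> i; rewrite inE.
rewrite !prod_nat_const exp1n mul1n.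
congr (2 ^ _).
have := cardsC A; rewrite card_ord => hA.
by rewrite -[X in X - _]hA addKn.
Qed.

Lemma count_Sg n (E : {set {set 'I_n}}) (c : {set 'I_n} -> 'I_2) D :
  (forall u v : 'I_n, u != v -> exists p, rainbow_path E c u v p) ->
  \sum_(u in Lo E D) 2 ^ (n - #|Nh E D u|) <= 2 ^ n * (1 + D + D * D).
Proof.
move=> hc.
have h : \sum_(s : {ffun 'I_n -> 'I_2}) #|Sg E c D s|
         <= \sum_(s : {ffun 'I_n -> 'I_2}) (1 + D + D * D).
  by apply: leq_sum => s _; apply: Sg_card.
rewrite sum_nat_const card_ffun !card_ord in h.
apply: leq_trans h.
rewrite (eq_bigr (fun s => \sum_u (u \in Sg E c D s : nat)));
  last by move=> s _; rewrite sum_mem_card.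
rewrite exchange_big /= big_mkcond /=.
apply: leq_sum => u _.
rewrite (eq_bigr (fun s => (s \in [set s | u \in Sg E c D s] : nat)));
  last by move=> s _; rewrite inE.
rewrite sum_mem_card.
case: ifP => hu; last by [].
rewrite -(count_fix (Nh E D u) (fun x => c [set u; x])).
apply: subset_leq_card; apply/subsetP => s; rewrite !in_set => ->; by rewrite andbT; move: hu; rewrite /Lo in_set.
Qed.

Lemma exch_card n (E : {set {set 'I_n}}) (Q : 'I_n -> {set 'I_n} -> bool) :
  \sum_u #|[set e in E | Q u e]| = \sum_(e in E) #|[set u | Q u e]|.
Proof.
rewrite (eq_bigr (fun u => \sum_e (e \in [set e in E | Q u e] : nat)));
  last by move=> u _; rewrite sum_mem_card.
rewrite exchange_big /= [RHS]big_mkcond /=.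
apply: eq_bigr => e _.
case: ifP => he.
  rewrite -sum_mem_card; apply: eq_bigr => u _; by rewrite !inE he.
by rewrite big1 // => u _; rewrite !inE he.
Qed.

Lemma nb_inj n (E : {set {set 'I_n}}) u :
  simple_graph E -> {in Nb E u &, injective (fun x => [set u; x])}.
Proof.
move=> hE x y hx hy /= hxy.
have : x \in [set u; y] by rewrite -hxy set22.
rewrite in_set2 => /orP[/eqP exu|/eqP //].
by move: hx; rewrite in_set exu => /(edge_neq hE); rewrite eqxx.
Qed.

Lemma sum_sub_le (T : finType) (A : {pred T}) (f : T -> nat) :
  \sum_(u in A) f u <= \sum_u f u.
Proof.
by rewrite big_mkcond; apply: leq_sum => u _; case: ifP.
Qed.

Lemma handshake n (E : {set {set 'I_n}}) D :
  simple_graph E -> D * #|~: Lo E D| <= 2 * #|E|.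
Proof.
move=> hE.
apply: (@leq_trans (\sum_(u in ~: Lo E D) #|Nb E u|)).
  rewrite mulnC -sum_nat_const; apply: leq_sum => u.
  by rewrite !inE ltnNge negbK.
apply: (leq_trans (sum_sub_le _ _)).
apply: (@leq_trans (\sum_u #|[set e in E | u \in e]|)).
  apply: leq_sum => u _.
  rewrite -(card_in_imset (@nb_inj _ E u hE)).
  apply: subset_leq_card; apply/subsetP => e /imsetP [x hx ->].
  by rewrite in_set set21 andbT; move: hx; rewrite in_set.
rewrite (exch_card E (fun u e => u \in e)).
rewrite (eq_bigr (fun _ => 2)); first by rewrite sum_nat_const mulnC.
move=> e he; rewrite -(hE e he); apply: eq_card => x; by rewrite inE.
Qed.

Lemma cross_edges n (E : {set {set 'I_n}}) D :
  simple_graph E -> \sum_(u in Lo E D) #|Nh E D u| <= #|E|.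
Proof.
move=> hE.
set H := ~: Lo E D.
pose Q0 := fun (u : 'I_n) (e : {set 'I_n}) => [&& u \in Lo E D, u \in e & e :&: H != set0].
apply: (@leq_trans (\sum_u #|[set e in E | Q0 u e]|)).
  rewrite big_mkcond; apply: leq_sum => u _.
  case: ifP => hu //.
  have hinj : {in Nh E D u &, injective (fun x => [set u; x])}.
    move=> x y hx hy; apply: (@nb_inj _ E u hE).
      by move: hx; rewrite /Nh in_setI => /andP[].
    by move: hy; rewrite /Nh in_setI => /andP[].
  rewrite -(card_in_imset hinj).
  apply: subset_leq_card; apply/subsetP => e /imsetP [x hx ->].
  move: hx; rewrite /Nh in_setI => /andP[hx hxH].
  rewrite in_set /Q0 set21 hu; move: hx; rewrite in_set => -> /=.
  apply/set0Pn; exists x.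
  by rewrite in_setI set22 /H hxH.
apply: (leq_trans (eq_leq (exch_card E Q0))); rewrite -sum1_card /Q0.
apply: leq_sum => e he.
case: (set_0Vmem (e :&: H)) => [->|[x hx]].
  rewrite eqxx; apply: (@leq_trans 0) => //; rewrite leqn0 cards_eq0.
  by apply/eqP/setP => u; rewrite !inE /= !andbF.
have h2 := cardsID (Lo E D) e.
rewrite (hE e he) in h2.
have h1 : 0 < #|e :\: Lo E D|.
  apply/card_gt0P; exists x; move: hx; by rewrite !inE andbC.
apply: (@leq_trans #|e :&: Lo E D|).
  apply: subset_leq_card; apply/subsetP => u; rewrite !inE.
  by case/and3P => -> -> _.
move: h1 h2; set a := #|e :&: _|; set b := #|e :\: _|.
case: a => [|[|a]] //; case: b => [|b] //= _ /eqP; by rewrite !addSn addnS.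
Qed.
From Stdlib Require Import Lra. From Stdlib Require ZArith. Open Scope R_scope.
Open Scope R_scope.

Lemma ln_le' x y : 0 < x -> x <= y -> ln x <= ln y.
Proof.
intros hx hxy; destruct (Rle_lt_or_eq_dec x y hxy) as [h|h].
- left; apply ln_increasing; lra.
- subst; lra.
Qed.

Lemma ln_upper w : 0 < w -> ln w <= w - 1.
Proof.
intros hw; generalize (exp_ineq1_le (ln w)); rewrite exp_ln; lra.
Qed.

Lemma ln2_pos : / 2 < ln 2.
Proof. exact ln_lt_2. Qed.

Lemma final_real (nR e hh Sm D : R) :
  32 <= nR ->
  (ln nR / ln 2) ^ 2 <= D <= (ln nR / ln 2) ^ 2 + 1 ->
  0 <= e -> 0 <= hh -> D * hh <= 2 * e -> Sm <= e ->
  (0 < nR - hh -> Sm >= (nR - hh) * (ln (nR - hh) - ln (1 + D + D * D)) / ln 2) ->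
  e >= nR * (ln nR / ln 2) - 4 * nR * (ln (ln nR / ln 2) / ln 2) - 2 * nR.
Proof.
intros hn [hD1 hD2] he hh0 hDh hSe hS.
assert (hL2 := ln2_pos).
set (L2 := ln 2) in *.
set (l := ln nR / L2) in *.
assert (hl5 : 5 <= l).
{ unfold l. apply (Rmult_le_reg_r L2); [lra|].
  unfold Rdiv; rewrite Rmult_assoc Rinv_l; [|lra]. rewrite Rmult_1_r.
  assert (h32 : ln 32 = 5 * L2).
  { replace 32 with (2 ^ 5) by lra. unfold L2; rewrite ln_pow; [simpl; lra| lra]. }
  rewrite <- h32. apply ln_le'; lra. }
set (q := ln l / L2).
assert (hq2 : 2 <= q).
{ unfold q. apply (Rmult_le_reg_r L2); [lra|].
  unfold Rdiv; rewrite Rmult_assoc Rinv_l; [|lra]. rewrite Rmult_1_r.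
  assert (h4 : ln 4 = 2 * L2).
  { replace 4 with (2 ^ 2) by lra. unfold L2; rewrite ln_pow; [simpl; lra| lra]. }
  rewrite <- h4. apply ln_le'; lra. }
assert (hnq : 0 <= nR * q) by (apply Rmult_le_pos; lra).
destruct (Rle_or_lt (nR * l) e) as [Hbig|Hsmall].
{ lra. }
assert (hlh : l * hh < 2 * nR).
{ assert (h1 : l * l * hh <= D * hh) by (apply Rmult_le_compat_r; simpl in hD1; lra).
  apply (Rmult_lt_reg_l l); [lra|]. nra. }
set (x := nR - hh) in *.
assert (hx : nR * (1 - 2 / l) <= x).
{ unfold x. apply (Rmult_le_reg_l l); [lra|].
  replace (l * (nR * (1 - 2 / l))) with (l * nR - 2 * nR) by (field; lra). nra. }
assert (hx0 : 0 < x).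
{ assert (0 < 1 - 2 / l).
  { assert (2 / l <= 2 / 5) by (apply Rmult_le_compat_l; [lra| apply Rinv_le_contravar; lra]). lra. }
  assert (0 < nR * (1 - 2 / l)) by (apply Rmult_lt_0_compat; lra). lra. }
set (B0 := l - 4 * q - 10 / l).
assert (hgoal : nR * l - 4 * nR * q - 2 * nR = nR * (B0 + 10 / l - 2)) by (unfold B0; field; lra).
destruct (Rlt_or_le B0 0) as [hB|hB].
{ assert (10 / l <= 2).
  { apply (Rmult_le_reg_l l); [lra|]. replace (l * (10 / l)) with 10 by (field; lra). lra. }
  assert (nR * (B0 + 10 / l - 2) <= 0).
  { assert (nR * (- (B0 + 10 / l - 2)) >= 0) by (apply Rle_ge, Rmult_le_pos; lra). lra. }
  lra. }
set (y := 2 / l) in *.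
assert (hy : 0 < y <= 2 / 5).
{ unfold y; split; [apply Rdiv_lt_0_compat; lra|].
  apply Rmult_le_compat_l; [lra| apply Rinv_le_contravar; lra]. }
assert (hnR0 : 0 < nR) by lra.
assert (hlnx : ln nR - 2 * y <= ln x).
{ assert (hinv : / (1 - y) <= 1 + 2 * y).
  { apply (Rmult_le_reg_l (1 - y)); [lra|]. rewrite Rinv_r; [|lra]. nra. }
  assert (hl1 : - ln (1 - y) <= 2 * y).
  { rewrite <- ln_Rinv; [|lra]. generalize (@ln_upper (/ (1 - y))).
    intro h; assert (0 < / (1 - y)) by (apply Rinv_0_lt_compat; lra). lra. }
  assert (ln (nR * (1 - y)) <= ln x) by (apply ln_le'; [apply Rmult_lt_0_compat; lra| exact hx]).
  rewrite ln_mult in H; lra. }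
set (K := 1 + D + D * D) in *.
assert (hK0 : 0 < K) by (unfold K; nra).
assert (hlnK : ln K <= 4 * ln l + 4 / (l * l)).
{ assert (hK1 : K <= l ^ 4 * (1 + 4 / (l * l))).
  { replace (l ^ 4 * (1 + 4 / (l * l))) with (l ^ 4 + 4 * (l * l)) by (field; lra).
    unfold K. simpl in hD1, hD2. nra. }
  assert (hz : 0 < 4 / (l * l)) by (apply Rdiv_lt_0_compat; nra).
  assert (ln K <= ln (l ^ 4 * (1 + 4 / (l * l)))) by (apply ln_le'; lra).
  rewrite ln_mult in H; [|apply pow_lt; lra|lra].
  rewrite ln_pow in H; [|lra].
  generalize (@ln_upper (1 + 4 / (l * l))). intro h. simpl INR in H. lra. }
assert (hLl : L2 * l = ln nR) by (unfold l; field; lra).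
assert (hLq : L2 * q = ln l) by (unfold q; field; lra).
assert (hBB : L2 * B0 <= ln x - ln K).
{ unfold B0.
  assert (h1 : 4 / (l * l) <= 4 / (5 * l)).
  { apply Rmult_le_compat_l; [lra|]. apply Rinv_le_contravar; nra. }
  assert (h2 : 2 * y + 4 / (5 * l) <= L2 * (10 / l)).
  { unfold y. apply (Rmult_le_reg_l l); [lra|].
    replace (l * (2 * (2 / l) + 4 / (5 * l))) with (4 + 4 / 5) by (field; lra).
    replace (l * (L2 * (10 / l))) with (10 * L2) by (field; lra). lra. }
  replace (L2 * (l - 4 * q - 10 / l)) with (L2 * l - 4 * (L2 * q) - L2 * (10 / l)) by ring.
  lra. }
assert (hS1 : Sm >= x * B0).
{ assert (hB' : B0 <= (ln x - ln K) / L2).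
  { apply (Rmult_le_reg_l L2); [lra|]. replace (L2 * ((ln x - ln K) / L2)) with (ln x - ln K) by (field; lra). lra. }
  specialize (hS hx0).
  assert (x * B0 <= x * ((ln x - ln K) / L2)) by (apply Rmult_le_compat_l; lra).
  replace (x * (ln x - ln K) / L2) with (x * ((ln x - ln K) / L2)) in hS by (field; lra).
  lra. }
assert (hS2 : nR * (1 - y) * B0 <= x * B0) by (apply Rmult_le_compat_r; lra).
assert (hid : nR * (1 - y) * B0 - nR * (B0 + 10 / l - 2) = nR / l * (8 * q - 10 + 20 / l)).
{ unfold y, B0; field; lra. }
assert (0 <= nR / l * (8 * q - 10 + 20 / l)).
{ apply Rmult_le_pos; [apply Rlt_le, Rdiv_lt_0_compat; lra|].
  assert (0 < 20 / l) by (apply Rdiv_lt_0_compat; lra). lra. }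
lra.
Qed.

Lemma INR_expn2 m : INR (expn 2 m) = exp (INR m * ln 2).
Proof.
rewrite -ln_pow; [|lra]. rewrite exp_ln; [|apply pow_lt; lra].
elim: m => [|m IH] //=.
rewrite expnS -IH -multE mult_INR. simpl INR. ring.
Qed.

Lemma INR_sum_seq (T : Type) (s : seq T) (f : T -> nat) :
  INR (\sum_(i <- s) f i) = \big[Rplus/0]_(i <- s) INR (f i).
Proof.
elim: s => [|a s IH]; first by rewrite !big_nil.
by rewrite !big_cons -IH -plus_INR.
Qed.

Lemma sum_pow_factor (T : Type) (s : seq T) (h : T -> nat) n :
  (forall i, (h i <= n)%N) ->
  \big[Rplus/0]_(i <- s) INR (expn 2 (n - h i))
   = INR (expn 2 n) * \big[Rplus/0]_(i <- s) exp (- (INR (h i) * ln 2)).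
Proof.
move=> hh; elim: s => [|a s IH]; first by rewrite !big_nil; ring.
rewrite !big_cons IH Rmult_plus_distr_l; congr (_ + _).
rewrite !INR_expn2 minus_INR; last by apply/leP.
rewrite -exp_plus; congr exp; ring.
Qed.

Lemma jensen_seq (T : Type) (s : seq T) (h : T -> nat) (a : R) :
  exp (- (a * ln 2)) * (INR (size s) + ln 2 * (a * INR (size s) - INR (\sum_(i <- s) h i)))
  <= \big[Rplus/0]_(i <- s) exp (- (INR (h i) * ln 2)).
Proof.
elim: s => [|b s IH].
  rewrite !big_nil /=; lra.
rewrite !big_cons (_ : size (b :: s) = (size s).+1) // S_INR -plusE plus_INR.
have key : exp (- (a * ln 2)) * (1 + ln 2 * (a - INR (h b))) <= exp (- (INR (h b) * ln 2)).
  have -> : exp (- (INR (h b) * ln 2)) = exp (- (a * ln 2)) * exp (ln 2 * (a - INR (h b))).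
    rewrite -exp_plus; congr exp; ring.
  apply: Rmult_le_compat_l; first by apply: Rlt_le; apply: exp_pos.
  exact: exp_ineq1_le.
have : exp (- (a * ln 2)) * (INR (size s) + 1 + ln 2 * (a * (INR (size s) + 1) - (INR (h b) + INR (\sum_(i <- s) h i))))
  = exp (- (a * ln 2)) * (1 + ln 2 * (a - INR (h b))) + exp (- (a * ln 2)) * (INR (size s) + ln 2 * (a * INR (size s) - INR (\sum_(i <- s) h i))) by ring.
move=> ->. lra.
Qed.

Lemma kraft_to_bound (X Sm K Sx : R) : 0 < X -> 0 < K ->
  exp (- (Sm / X * ln 2)) * (X + ln 2 * (Sm / X * X - Sm)) <= Sx -> Sx <= K ->
  Sm >= X * (ln X - ln K) / ln 2.
Proof.
move=> hX hK h1 h2.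
have hL2 := ln2_pos.
have e1 : Sm / X * X - Sm = 0 by field; lra.
rewrite e1 Rmult_0_r Rplus_0_r in h1.
have h3 : exp (- (Sm / X * ln 2)) * X <= K by lra.
have h4 : ln (exp (- (Sm / X * ln 2)) * X) <= ln K.
  apply: ln_le' => //; apply: Rmult_lt_0_compat => //; exact: exp_pos.
rewrite ln_mult ?ln_exp in h4; [|exact: exp_pos|lra].
have h5 : X * (ln X - ln K) <= X * (Sm / X * ln 2) by apply: Rmult_le_compat_l; lra.
have e2 : X * (Sm / X * ln 2) = Sm * ln 2 by field; lra.
rewrite e2 in h5.
apply: Rle_ge.
apply: (Rmult_le_reg_r (ln 2)); first lra.
have -> : X * (ln X - ln K) / ln 2 * ln 2 = X * (ln X - ln K) by field; lra.
exact: h5.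
Qed.

Lemma INR_2mul k : INR (2 * k) = 2 * INR k.
Proof. by rewrite -multE mult_INR; simpl INR; ring. Qed.

Lemma main_bound n (E : {set {set 'I_n}}) :
  simple_graph E -> rainbow_connected 2 E -> (32 <= n)%N ->
  INR #|E| >= INR n * log2 (INR n) - 4 * INR n * log2 (log2 (INR n)) - 2 * INR n.
Proof.
move=> hE [c hc] hn.
rewrite /log2.
have [hz1 hz2] := archimed ((ln (INR n) / ln 2) ^ 2).
set z := up _ in hz1 hz2.
have hz0 : (0 <= z)%Z.
  apply: le_IZR; have := pow2_ge_0 (ln (INR n) / ln 2); lra.
pose D := Z.to_nat z.
have hDR : INR D = IZR z by rewrite INR_IZR_INZ ZArith.Znat.Z2Nat.id.
have hNh : forall u, (#|Nh E D u| <= n)%N.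
  by move=> u; apply: leq_trans (max_card _) _; rewrite card_ord.
have hcard : INR n = INR #|Lo E D| + INR #|~: Lo E D|.
  by rewrite -plus_INR plusE cardsC card_ord.
apply: (@final_real (INR n) (INR #|E|) (INR #|~: Lo E D|)
          (INR (\sum_(u in Lo E D) #|Nh E D u|)) (INR D)).
- have h32 : INR 32 = 32 by simpl; lra.
  by rewrite -h32; apply: le_INR; apply/leP.
- rewrite hDR; lra.
- exact: pos_INR.
- exact: pos_INR.
- rewrite -mult_INR -INR_2mul; apply: le_INR; apply/leP.
  rewrite multE; exact: (@handshake _ E D hE).
- by apply: le_INR; apply/leP; apply: cross_edges.
move=> hpos.
have eX : INR n - INR #|~: Lo E D| = INR #|Lo E D| by lra.
rewrite eX in hpos *.
have eK : 1 + INR D + INR D * INR D = INR (1 + D + D * D).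
  by rewrite -!multE -!plusE !plus_INR mult_INR.
rewrite eK.
have hcnt := @count_Sg _ E c D hc.
rewrite -!big_enum in hcnt *.
rewrite cardE in hpos *.
set s := enum (Lo E D) in hcnt hpos *.
set Sx := \big[Rplus/0]_(i <- s) exp (- (INR #|Nh E D i| * ln 2)).
apply: (@kraft_to_bound _ _ _ Sx) => //.
- apply: lt_0_INR; apply/ltP; by rewrite addnC addnA addn1.
- exact: jensen_seq.
have h1 : INR (\sum_(u <- s) 2 ^ (n - #|Nh E D u|)) <= INR (2 ^ n * (1 + D + D * D)).
  by apply: le_INR; apply/leP.
rewrite INR_sum_seq (@sum_pow_factor _ s (fun u => #|Nh E D u|) n hNh) -multE mult_INR in h1.
have h2 : 0 < INR (2 ^ n) by rewrite INR_expn2; apply: exp_pos.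
apply: (Rmult_le_reg_l (INR (2 ^ n))) => //.
Qed.

Theorem proposition1 :
  exists N : nat, forall n : nat, leq N n ->
    INR (t n 2) >= INR n * log2 (INR n) - 4 * INR n * log2 (log2 (INR n))
                   - 2 * INR n.
Proof.
exists 32%N => n hn.
rewrite /t.
apply: (@big_ind nat (fun m => INR m >= INR n * log2 (INR n) - 4 * INR n * log2 (log2 (INR n)) - 2 * INR n)).
- pose Ef := [set e : {set 'I_n} | #|e| == 2%N].
  have hEf : #|Ef| = 'C(n, 2) by rewrite /Ef card_draws card_ord.
  rewrite -hEf; apply: main_bound => //.
    by move=> e; rewrite inE => /eqP.
  exists (fun _ => ord0) => u v huv; exists [:: v].
  split => //=.
  + by rewrite inE huv.
  + by rewrite andbT inE cards2 huv.
- by move=> a b ha hb; case: (leqP a b).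
- move=> E; rewrite /asb; case: ClassicalEpsilon.excluded_middle_informative => // [[hE hc]] _.
  exact: main_bound.
Qed.
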